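(* Let $\ell\ge2$, $r_0,\dots,r_\ell\ge1$ integers, $d_0,\dots,d_\ell$ integers with $d_V=\sum_kd_k=0$ and $d_0+d_1\le0$, and let $c$ be a real number with $c>\max_k d_k/r_k$. Then $\Delta_{\Sigma_2}>0$, where $$\Delta_{\Sigma_2}=\sum_{k=2}^\ell\frac{d_k\big(2r_k(1+r_V)c-(r_V+2)d_k\big)}{(r_V+1)r_Vc\,[r_k(r_V+2)c-2d_k]}+\frac{r_V(r_V+2)(r_V+1)c^2-2(r_V+1)(r_V-r_0-r_1)\mu_{01}c-(r_V+2)(d_1+d_0)\mu_{01}}{r_V(r_V+1)c\,[(r_V+2)c-2\mu_{01}]}.$$
   Context: $r_V=\sum_{k=0}^\ell r_k$ and $\mu_{01}=\frac{d_0+d_1}{r_0+r_1}$. *)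

(* Defs.v *)
From mathcomp Require Import all_boot all_order all_algebra.
From mathcomp Require Import reals.
Set Implicit Arguments. Unset Strict Implicit. Unset Printing Implicit Defensive.
Import Order.TTheory GRing.Theory Num.Theory.
Local Open Scope ring_scope.

Definition rV (R : realType) (l : nat) (r : nat -> nat) : R :=
  (\sum_(0 <= k < l.+1) r k)%:R.

Definition mu01 (R : realType) (r : nat -> nat) (d : nat -> int) : R :=
  ((d 0%N)%:~R + (d 1%N)%:~R) / ((r 0%N)%:R + (r 1%N)%:R).

Definition DeltaSigma2 (R : realType) (l : nat) (r : nat -> nat)
    (d : nat -> int) (c : R) : R :=
  let rv := rV R l r in
  let mu := mu01 R r d in
  let rk k : R := (r k)%:R in
  let dk k : R := (d k)%:~R in
  \sum_(2 <= k < l.+1)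
     (dk k * (2 * rk k * (1 + rv) * c - (rv + 2) * dk k)) /
     ((rv + 1) * rv * c * (rk k * (rv + 2) * c - 2 * dk k))
  + (rv * (rv + 2) * (rv + 1) * c ^+ 2
     - 2 * (rv + 1) * (rv - rk 0%N - rk 1%N) * mu * c
     - (rv + 2) * (dk 1%N + dk 0%N) * mu) /
    (rv * (rv + 1) * c * ((rv + 2) * c - 2 * mu)).

(* Main.v *)
Require Import Defs.
From mathcomp Require Import all_boot all_order all_algebra.
From mathcomp Require Import reals.
From mathcomp Require Import ring lra.
Import Order.TTheory GRing.Theory Num.Theory.
Local Open Scope ring_scope.

Lemma termA (R : realFieldType) (V r x c : R) : 0 < V -> 0 < c -> 0 < r -> x < r * c ->
  (V+2)*x/(2*((V+1)*V*c)) - r/V <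
  x*(2*r*(1+V)*c - (V+2)*x)/((V+1)*V*c*(r*(V+2)*c - 2*x)).
Proof.
move=> V0 c0 r0 xr.
have rVc := mulr_gt0 (mulr_gt0 r0 V0) c0.
have D0 : 0 < r*(V+2)*c - 2*x by nra.
have V1 : 0 < V + 1 by lra.
rewrite -subr_gt0.
have -> : x*(2*r*(1+V)*c - (V+2)*x)/((V+1)*V*c*(r*(V+2)*c - 2*x)) -
  ((V+2)*x/(2*((V+1)*V*c)) - r/V) =
  (V+2)*r*c*(2*r*(V+1)*c - (V+2)*x) / (2*((V+1)*V*c)*(r*(V+2)*c - 2*x)).
  by field; rewrite !lt0r_neq0 //; lra.
have h1 : 0 < (V+2)*r*c by rewrite !mulr_gt0 //; lra.
have h2 : 0 < 2*r*(V+1)*c - (V+2)*x by nra.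
have h3 : 0 < 2*((V+1)*V*c) by rewrite !mulr_gt0 //; lra.
apply: divr_gt0; first exact: mulr_gt0.
exact: mulr_gt0.
Qed.

Lemma lastB (R : realFieldType) (V r0 r1 d0 d1 c : R) : 0 < V -> 0 < c ->
  0 < r0 + r1 -> d0 + d1 <= 0 ->
  (V+2)*(d0+d1)/(2*((V+1)*V*c)) - (r0+r1)/V + 1 <
  (V*(V+2)*(V+1)*c^+2 - 2*(V+1)*(V - r0 - r1)*((d0+d1)/(r0+r1))*c
     - (V+2)*(d1+d0)*((d0+d1)/(r0+r1))) /
  (V*(V+1)*c*((V+2)*c - 2*((d0+d1)/(r0+r1)))).
Proof.
move=> V0 c0 rp S0.
have mu0 : (d0+d1)/(r0+r1) <= 0 by rewrite ler_pdivrMr // mul0r.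
have Sq : d0+d1 < (r0+r1) * c by have := mulr_gt0 rp c0; lra.
have := @termA R _ _ _ _ V0 c0 rp Sq.
have D0 : 0 < (r0+r1)*(V+2)*c - 2*(d0+d1).
  have := mulr_gt0 (mulr_gt0 rp V0) c0; nra.
have E0 : (V+2)*c - 2*((d0+d1)/(r0+r1)) != 0.
  by rewrite lt0r_neq0 //; have := mulr_gt0 V0 c0; nra.
have -> : (V*(V+2)*(V+1)*c^+2 - 2*(V+1)*(V - r0 - r1)*((d0+d1)/(r0+r1))*c
     - (V+2)*(d1+d0)*((d0+d1)/(r0+r1))) /
  (V*(V+1)*c*((V+2)*c - 2*((d0+d1)/(r0+r1)))) =
  1 + (d0+d1)*(2*(r0+r1)*(1+V)*c - (V+2)*(d0+d1))/((V+1)*V*c*((r0+r1)*(V+2)*c - 2*(d0+d1))).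
  by field; rewrite !lt0r_neq0 //; lra.
move=> H; lra.
Qed.

Theorem lemma3p21 (R : realType) (l : nat) (r : nat -> nat) (d : nat -> int)
    (c : R) :
  (2 <= l)%N ->
  (forall k, (k <= l)%N -> (1 <= r k)%N) ->
  (\sum_(0 <= k < l.+1) d k = 0)%R ->
  (d 0%N + d 1%N <= 0)%R ->
  (forall k, (k <= l)%N -> (d k)%:~R / (r k)%:R < c) ->
  0 < DeltaSigma2 l r d c.
Proof.
move=> hl hr hsum hd01 hc.
have sumd : \sum_(0 <= k < l.+1) ((d k)%:~R : R) = 0.
  by have := congr1 (fun z : int => z%:~R : R) hsum; rewrite /= rmorph_sum.
have sumr : \sum_(0 <= k < l.+1) ((r k)%:R : R) = rV R l r.
  by rewrite /rV natr_sum.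
have rpos : forall k, (k <= l)%N -> 0 < ((r k)%:R : R).
  by move=> k /hr; rewrite ltr0n.
have dlt : forall k, (k <= l)%N -> ((d k)%:~R : R) < (r k)%:R * c.
  by move=> k kl; rewrite mulrC -ltr_pdivrMr ?rpos ?hc.
set V := rV R l r. rewrite -/V in sumr.
have V0 : 0 < V.
  rewrite -sumr big_ltn //.
  apply: (lt_le_trans (rpos 0%N (leq0n _))); rewrite lerDl.
  by apply: sumr_ge0 => i _; apply: ler0n.
have c0 : 0 < c.
  have : \sum_(0 <= k < l.+1) ((d k)%:~R : R) < \sum_(0 <= k < l.+1) ((r k)%:R * c).
    by apply: ltr_sum_nat => // i /andP[_ il]; apply: dlt.
  rewrite sumd -mulr_suml sumr. by rewrite pmulr_rgt0.
have d01 : ((d 0%N)%:~R : R) + (d 1%N)%:~R <= 0.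
  by rewrite -intrD; move: hd01; rewrite -(ler_int R).
have r01 : (0 : R) < (r 0%N)%:R + (r 1%N)%:R.
  by apply: addr_gt0; apply: rpos => //; apply: ltnW.
have sd2 : \sum_(2 <= k < l.+1) ((d k)%:~R : R) = - ((d 0%N)%:~R + (d 1%N)%:~R).
  by move: sumd; rewrite big_ltn // big_ltn ?ltnS 1?ltnW // => h; lra.
have sr2 : \sum_(2 <= k < l.+1) ((r k)%:R : R) = V - ((r 0%N)%:R + (r 1%N)%:R).
  by move: sumr; rewrite big_ltn // big_ltn ?ltnS 1?ltnW // => h; lra.
have hB := @lastB R _ _ _ _ _ _ V0 c0 r01 d01.
set K := (V+1)*V*c.
have hA : \sum_(2 <= k < l.+1) ((V+2)*((d k)%:~R)/(2*K) - (r k)%:R/V) <=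
  \sum_(2 <= k < l.+1) ((d k)%:~R * (2 * (r k)%:R * (1 + V) * c - (V + 2) * (d k)%:~R)) /
     ((V + 1) * V * c * ((r k)%:R * (V + 2) * c - 2 * (d k)%:~R)).
  apply: ler_sum_nat => i /andP[_ il]; apply: ltW; apply: (@termA R) => //.
  - by apply: rpos.
  - by apply: dlt.
have eA : \sum_(2 <= k < l.+1) ((V+2)*((d k)%:~R)/(2*K) - (r k)%:R/V) =
  (V+2) * (\sum_(2 <= k < l.+1) ((d k)%:~R : R)) / (2*K) - (\sum_(2 <= k < l.+1) ((r k)%:R : R)) / V.
  by rewrite sumrB -!mulr_suml -mulr_sumr.
rewrite sd2 sr2 in eA.
rewrite /DeltaSigma2 /= -/V /mu01.
have e1 : (V - ((r 0%N)%:R + (r 1%N)%:R)) / V = 1 - ((r 0%N)%:R + (r 1%N)%:R) / V.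
  by field; rewrite lt0r_neq0.
have e2 : (V + 2) * - ((d 0%N)%:~R + (d 1%N)%:~R) / (2 * K) =
   - ((V + 2) * ((d 0%N)%:~R + (d 1%N)%:~R) / (2 * ((V + 1) * V * c))).
  by rewrite /K mulrN mulNr.
rewrite e1 e2 in eA.
lra.
Qed.
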